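(* The algorithm $K_2$ for the $2$-cache problem is a knowledge state algorithm (that is, each specified adjustment satisfies the required inequality $(\omega\wedge r)(x)\ge\mathrm{adjust}+\sum_i\lambda_i\omega_i(x)$ for all configurations $x$), and the function $\Phi$ defined by $\Phi(A^{a,b})=0$ and $\Phi(B^{a,b,c})=\tfrac12$ is a $\tfrac32$-ks-potential for $K_2$.
   Context: The $k$-cache problem: there is an infinite set $P$ of pages; the state set $\mathcal X$ is the set of $k$-element subsets of $P$ (cache contents), with a given initial cache $s^0$; the requests are the pages, $\mathcal R=P$; $d(x,y)=|x\setminus y|$; and $\mathrm{cost}(x,r,y)=2$ if $x=y$ and $r\notin x$; $\mathrm{cost}(x,r,y)=d(x,y)$ if $r\in x$ or $r\in y$; $\mathrm{cost}(x,r,y)=d(x,y)+1$ otherwise. $\Pi$ is the set of finitely supported probability distributions on $\mathcal X$; for $\pi,\pi'\in\Pi$, $\mathrm{cost}(\pi,r,\pi')$ is the minimum of $\sum_{x,y}\gamma(x,y)\mathrm{cost}(x,r,y)$ over distributions $\gamma$ on $\mathrm{supp}(\pi)\times\mathrm{supp}(\pi')$ with marginals $\pi,\pi'$. An estimator is a function $\omega:\mathcal X\to[0,\infty)$ with $\omega(y)\le\omega(x)+d(x,y)$; the update operator is $(\omega\wedge r)(y)=\inf_{x}\{\omega(x)+\mathrm{cost}(x,r,y)\}$. Bar notation: a string $\alpha$ of distinct page names and exactly $k$ bars, with at least $i$ page names to the left of the $i$-th bar, denotes the estimator $\omega_\alpha(y)=\min_{x\in S_\alpha}d(x,y)$, where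 $S_\alpha$ is the set of configurations $x$ such that for each $i=1,\dots,k$ at least $i$ elements of $x$ are written to the left of the $i$-th bar. E.g. for $k=2$, $ab||=d(\{a,b\},\cdot)$ and $a|bc|$ has $S=\{\{a,b\},\{a,c\}\}$. Knowledge state algorithm: a knowledge state is a pair $(\pi,\omega)$, $\pi\in\Pi$, $\omega$ an estimator; the initial one is $(s^0,\omega^0)$ with $\omega^0(s^0)=0$. For each knowledge state $k=(\pi,\omega)$ and request $r$ the algorithm specifies subsequent knowledge states $k_i=(\pi_i,\omega_i)$ with weights $\lambda_i>0$ summing to $1$ (the next state is $k_i$ with probability $\lambda_i$) and a real number $\mathrm{adjust}(k,r)$, required to satisfy $(\omega\wedge r)(x)\ge\mathrm{adjust}(k,r)+\sum_i\lambda_i\omega_i(x)$ for all $x$. Step cost $\mathrm{cost}(k,r)=\mathrm{cost}(\pi,r,\sum_i\lambda_i\pi_i)$. A $C$-ks-potential is a function $\Phi\ge0$ on knowledge states such that for every knowledge state $k$ and request $r$: $\mathrm{cost}(k,r)+\sum_i\lambda_i\Phi(k_i)-\Phi(k)\le C\cdot\mathrm{adjust}(k,r)$. Algorithm $K_2$ ($k=2$; $a,b,c,d$ always denote distinct pages). Knowledge states: $A^{a,b}=(\{a,b\},\ ab||)$ (point mass on $\{a,b\}$; $A^{a,b}=A^{b,a}$), and $B^{a,b,c}=(\tfrac12\{a,b\}+\tfrac12\{a,c\},\ a|bc|)$ (so $B^{a,b,c}=B^{a,c,b}$). Initial state $A^{a,b}$ where $s^0=\{a,b\}$. Transitions: from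 $A^{a,b}$: request $a$ or $b$: stay in $A^{a,b}$, adjust $0$; request $c\notin\{a,b\}$: go to $B^{c,a,b}$, adjust $1$. From $B^{a,b,c}$: request $a$: stay, adjust $0$; request $b$: go to $A^{b,a}$, adjust $0$; request $c$: go to $A^{c,a}$, adjust $0$; request $d\notin\{a,b,c\}$: go to each of $A^{d,a},A^{d,b},A^{d,c}$ with probability $\tfrac13$, adjust $\tfrac13$. *)

(* Defs.v *)
From HB Require Import structures.
From mathcomp Require Import all_boot all_order all_algebra.
From mathcomp Require Import finmap.
From mathcomp Require Import boolp classical_sets reals.
Set Implicit Arguments. Unset Strict Implicit. Unset Printing Implicit Defensive.
Import Order.TTheory GRing.Theory Num.Theory.
Local Open Scope ring_scope.

Section KCache.
Variables (R : realType) (T : choiceType).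
(* T = the set P of pages; configurations are finite sets of pages. *)

Definition config := {fset T}.

Definition Xset (k : nat) : set config := [set x : config | #|` x| = k]%classic.

Definition dist (x y : config) : R := (#|` fsetD x y|)%:R.

Definition cost (x : config) (r : T) (y : config) : R :=
  if (x == y) && (r \notin x) then 2
  else if (r \in x) || (r \in y) then dist x y
  else dist x y + 1.

Definition update (k : nat) (w : config -> R) (r : T) (y : config) : R :=
  inf [set w x + cost x r y | x in Xset k]%classic.

Definition estimator (k : nat) (w : config -> R) : Prop :=
  forall x y, Xset k x -> Xset k y -> 0 <= w x /\ w y <= w x + dist x y.

Definition is_fsdist (k : nat) (pi : config -> R) : Prop :=
  (forall x, 0 <= pi x) /\ (forall x, pi x != 0 -> Xset k x) /\
  exists s : seq config,
    [/\ uniq s, (forall x, x \notin s -> pi x = 0) & \sum_(x <- s) pi x = 1].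

(* c is the cost of some coupling gamma of pi and pi' (a distribution on
   supp(pi) x supp(pi') with marginals pi and pi'); s, s' are finite lists
   containing the supports. *)
Definition coupling_cost (pi : config -> R) (r : T) (pi' : config -> R) (c : R)
  : Prop :=
  exists (g : config -> config -> R) (s s' : seq config),
    [/\ uniq s /\ uniq s',
        (forall x, x \notin s -> pi x = 0) /\
        (forall y, y \notin s' -> pi' y = 0),
        (forall x y, 0 <= g x y) /\
        (forall x y, g x y != 0 -> pi x != 0 /\ pi' y != 0),
        (forall x, \sum_(y <- s') g x y = pi x) /\
        (forall y, \sum_(x <- s) g x y = pi' y) &
        c = \sum_(x <- s) \sum_(y <- s') g x y * cost x r y].

(* cost(pi, r, pi') = minimum over couplings (the infimum is attained) *)
Definition dcost (pi : config -> R) (r : T) (pi' : config -> R) : R :=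
  inf [set c | coupling_cost pi r pi' c]%classic.

(* KA a b = A^{a,b};  KB a b c = B^{a,b,c} *)
Inductive kstate := KA of T & T | KB of T & T & T.

Definition kvalid (q : kstate) : bool :=
  match q with
  | KA a b => a != b
  | KB a b c => [&& a != b, a != c & b != c]
  end.

Definition pi_of (q : kstate) : config -> R :=
  match q with
  | KA a b => fun x => (x == [fset a; b]%fset)%:R
  | KB a b c => fun x => (x == [fset a; b]%fset)%:R / 2 + (x == [fset a; c]%fset)%:R / 2
  end.

Definition omega_of (q : kstate) : config -> R :=
  match q with
  | KA a b => fun y => dist [fset a; b]%fset y
  | KB a b c => fun y => Num.min (dist [fset a; b]%fset y) (dist [fset a; c]%fset y)
  end.

(* transitions: (list of (lambda_i, k_i), adjust) *)
Definition K2 (q : kstate) (r : T) : seq (R * kstate) * R :=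
  match q with
  | KA a b => if (r == a) || (r == b) then ([:: (1, KA a b)], 0)
              else ([:: (1, KB r a b)], 1)
  | KB a b c =>
      if r == a then ([:: (1, KB a b c)], 0)
      else if r == b then ([:: (1, KA b a)], 0)
      else if r == c then ([:: (1, KA c a)], 0)
      else ([:: (1/3, KA r a); (1/3, KA r b); (1/3, KA r c)], 1/3)
  end.

Definition next_pi (l : seq (R * kstate)) : config -> R :=
  fun x => \sum_(p <- l) p.1 * pi_of p.2 x.

Definition next_omega (l : seq (R * kstate)) : config -> R :=
  fun x => \sum_(p <- l) p.1 * omega_of p.2 x.

Definition is_ks_algorithm (alg : kstate -> T -> seq (R * kstate) * R) : Prop :=
  (forall q, kvalid q -> is_fsdist 2 (pi_of q) /\ estimator 2 (omega_of q)) /\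
  forall q r, kvalid q ->
    [/\ all (fun p => kvalid p.2) (alg q r).1,
        all (fun p => 0 < p.1) (alg q r).1,
        \sum_(p <- (alg q r).1) p.1 = 1 &
        forall x, Xset 2 x ->
          update 2 (omega_of q) r x >= (alg q r).2 + next_omega (alg q r).1 x].

Definition step_cost (alg : kstate -> T -> seq (R * kstate) * R) q r : R :=
  dcost (pi_of q) r (next_pi (alg q r).1).

Definition is_ks_potential (alg : kstate -> T -> seq (R * kstate) * R)
  (Phi : kstate -> R) (C : R) : Prop :=
  (forall q, kvalid q -> 0 <= Phi q) /\
  forall q r, kvalid q ->
    step_cost alg q r + \sum_(p <- (alg q r).1) p.1 * Phi p.2 - Phi q
      <= C * (alg q r).2.

Definition Phi2 (q : kstate) : R :=
  match q with KA _ _ => 0 | KB _ _ _ => 1/2 end.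

End KCache.

(* Main.v *)
Require Import Defs.
From HB Require Import structures.
From mathcomp Require Import all_boot all_order all_algebra.
From mathcomp Require Import finmap.
From mathcomp Require Import boolp classical_sets reals.
From mathcomp Require Import lra zify.
Import Order.TTheory GRing.Theory Num.Theory.
Local Open Scope ring_scope.


Ltac crush :=
  rewrite ?eqxx /=;
  lazymatch goal with
  | H : ?x <> ?x |- _ => by case: H
  | |- context[?x == ?y] => case: (@eqP _ x y) => [?|?]; [subst; crush | match goal with H : x <> y |- _ => rewrite ?(introF eqP (not_eq_sym H)) end; crush]
  | _ => idtac
  end.

Ltac dec := repeat match goal with
 | H : ?u <> ?v |- context[?u == ?v] => rewrite (introF eqP H)
 | H : ?u <> ?v |- context[?v == ?u] => rewrite (introF eqP (not_eq_sym H))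
 end; rewrite ?eqxx /=.

Section H.
Variables (R : realType) (T : choiceType).
Implicit Types (a b c d r : T).

Definition distn2 (s1 s2 x1 x2 : T) : nat :=
  ((s1 != x1) && (s1 != x2)) + ((s2 != x1) && (s2 != x2)).
Definition costn2 (z1 z2 r x1 x2 : T) : nat :=
  if (((z1 == x1) && (z2 == x2)) || ((z1 == x2) && (z2 == x1))) && ~~ ((r == z1) || (r == z2)) then 2
  else if ((r == z1) || (r == z2)) || ((r == x1) || (r == x2)) then distn2 z1 z2 x1 x2
  else (distn2 z1 z2 x1 x2 + 1)%N.

Lemma tri2 (a b z1 z2 x1 x2 : T) : a <> b -> z1 <> z2 -> x1 <> x2 ->
  (distn2 a b x1 x2 <= distn2 a b z1 z2 + distn2 z1 z2 x1 x2)%N.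
Proof. move=> *; rewrite /distn2; crush; by []. Qed.

Lemma costge (z1 z2 r x1 x2 : T) : z1 <> z2 -> x1 <> x2 ->
  (distn2 z1 z2 x1 x2 <= costn2 z1 z2 r x1 x2)%N.
Proof. move=> *; rewrite /costn2 /distn2; crush; by []. Qed.

Lemma KAr_n (a b r z1 z2 x1 x2 : T) : a <> b -> r <> a -> r <> b -> z1 <> z2 -> x1 <> x2 ->
  (1 + minn (distn2 r a x1 x2) (distn2 r b x1 x2) <= distn2 a b z1 z2 + costn2 z1 z2 r x1 x2)%N.
Proof. move=> *; rewrite /costn2 /distn2; crush; by []. Qed.

Lemma KBb_n (a b c z1 z2 x1 x2 : T) : a <> b -> a <> c -> b <> c -> z1 <> z2 -> x1 <> x2 ->
  (distn2 b a x1 x2 <= minn (distn2 a b z1 z2) (distn2 a c z1 z2) + costn2 z1 z2 b x1 x2)%N.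
Proof. move=> *; rewrite /costn2 /distn2; crush; by []. Qed.

Lemma KBd_n (a b c d z1 z2 x1 x2 : T) : a<>b -> a<>c -> b<>c -> d<>a -> d<>b -> d<>c -> z1<>z2 -> x1<>x2 ->
 (1 + distn2 d a x1 x2 + distn2 d b x1 x2 + distn2 d c x1 x2 <= 3 * (minn (distn2 a b z1 z2) (distn2 a c z1 z2) + costn2 z1 z2 d x1 x2))%N.
Proof. move=> *; rewrite /costn2 /distn2; crush; by []. Qed.

Local Open Scope fset_scope.
Lemma cardD2 (s1 s2 : T) (X : {fset T}) : s1 != s2 ->
  #|` [fset s1; s2] `\` X| = ((s1 \notin X) + (s2 \notin X))%N.
Proof.
move=> ne.
have E : forall Y, (forall t, (t \in [fset s1; s2] `\` X) = (t \in Y)) ->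
   #|` [fset s1; s2] `\` X| = #|` Y|.
  by move=> Y h; congr (#|` _|); apply/fsetP.
case h1: (s1 \in X); case h2: (s2 \in X) => /=.
- rewrite (E fset0) ?cardfs0 // => t.
  by rewrite !inE; have [e1|n1] := eqVneq t s1; have [e2|n2] := eqVneq t s2;
    [move: ne; rewrite -e1 -e2 eqxx | rewrite e1 h1 /= ?andbF ?andbT | rewrite e2 h2 /= ?andbF ?andbT | rewrite /= ?andbF].
- rewrite (E [fset s2]) ?cardfs1 // => t.
  by rewrite !inE; have [e1|n1] := eqVneq t s1; have [e2|n2] := eqVneq t s2;
    [move: ne; rewrite -e1 -e2 eqxx | rewrite e1 h1 /= ?andbF ?andbT | rewrite e2 h2 /= ?andbF ?andbT | rewrite /= ?andbF].
- rewrite (E [fset s1]) ?cardfs1 // => t.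
  by rewrite !inE; have [e1|n1] := eqVneq t s1; have [e2|n2] := eqVneq t s2;
    [move: ne; rewrite -e1 -e2 eqxx | rewrite e1 h1 /= ?andbF ?andbT | rewrite e2 h2 /= ?andbF ?andbT | rewrite /= ?andbF].
- rewrite (E [fset s1; s2]) ?cardfs2 ?ne // => t.
  by rewrite !inE; have [e1|n1] := eqVneq t s1; have [e2|n2] := eqVneq t s2;
    [move: ne; rewrite -e1 -e2 eqxx | rewrite e1 h1 /= ?andbF ?andbT | rewrite e2 h2 /= ?andbF ?andbT | rewrite /= ?andbF].
Qed.

Lemma card2P (x : {fset T}) : #|` x| = 2%N ->
  exists x1 x2, x1 <> x2 /\ x = [fset x1; x2].
Proof.
move=> hx; case: (fset_0Vmem x) => [e|[x1 hx1]]; first by rewrite e cardfs0 in hx.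
have := cardfsD1 x1 x; rewrite hx hx1 => /eqP; rewrite eqSS eq_sym => /cardfs1P [x2 e].
have : x2 \in x `\ x1 by rewrite e inE.
rewrite !inE => /andP [ne _].
exists x1, x2; split; first by apply/eqP; rewrite eq_sym.
by rewrite -e fsetD1K.
Qed.

Lemma eq2 (z1 z2 x1 x2 : T) : z1 <> z2 -> x1 <> x2 ->
  ([fset z1; z2] == [fset x1; x2]) =
  ((z1 == x1) && (z2 == x2)) || ((z1 == x2) && (z2 == x1)).
Proof.
move=> nz nx; apply/eqP/idP.
- move=> E.
  have h1 : z1 \in [fset x1; x2] by rewrite -E !inE eqxx.
  have h2 : z2 \in [fset x1; x2] by rewrite -E !inE eqxx orbT.
  move: h1 h2; rewrite !inE.
  by do 2 case: eqP => //=; case: eqP => //=; case: eqP => //=; move=> *; subst.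
- by case/orP=> /andP [/eqP -> /eqP ->] //; apply/fsetP=> t; rewrite !inE orbC.
Qed.

Lemma dist2 (s1 s2 x1 x2 : T) : s1 <> s2 ->
  dist R [fset s1; s2] [fset x1; x2] = (distn2 s1 s2 x1 x2)%:R.
Proof. by move=> /eqP ne; rewrite /dist cardD2 // !inE !negb_or. Qed.

Lemma cost2 (z1 z2 r x1 x2 : T) : z1 <> z2 -> x1 <> x2 ->
  cost R [fset z1; z2] r [fset x1; x2] = (costn2 z1 z2 r x1 x2)%:R.
Proof.
move=> nz nx; rewrite /cost /costn2 eq2 // !inE dist2 //.
by case: ifP => _ //; case: ifP => _ //; rewrite natrD.
Qed.

Local Close Scope fset_scope.
Lemma minr2 (m n : nat) : Num.min (m%:R : R) n%:R = (minn m n)%:R.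
Proof. by rewrite -natr_min. Qed.

End H.



Lemma nF (R : realType) : (false%:R : R) = 0. Proof. by []. Qed.
Lemma nT (R : realType) : (true%:R : R) = 1. Proof. by []. Qed.
Ltac clr := repeat match goal with h : ~ @eq (Choice.sort _) _ _ |- _ => clear h end.
Ltac fin := rewrite /= ?nF ?nT; clr; lra.

Section M.
Variables (R : realType) (T : choiceType).
Notation fs2 a b := ([fset a; b]%fset : config T).
Notation PI := (@Defs.pi_of R T).
Notation OM := (@omega_of R T).

Lemma update_ge (w : config T -> R) r (x : config T) v : Xset 2 x ->
  (forall z, Xset 2 z -> v <= w z + cost R z r x) -> v <= update 2 w r x.
Proof.
move=> hx h; apply: lb_le_inf; first by exists (w x + cost R x r x); exists x.
by move=> _ [z hz <-]; exact: h.
Qed.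

Lemma cost_ge_dist (z x : config T) r : Xset 2 z -> Xset 2 x -> dist R z x <= cost R z r x.
Proof.
move=> /card2P [z1 [z2 [nz ->]]] /card2P [x1 [x2 [nx ->]]].
by rewrite dist2 // cost2 // ler_nat costge.
Qed.

Lemma cost_ge0 (z x : config T) r : 0 <= cost R z r x.
Proof. by rewrite /cost; case: ifP => _ //; case: ifP => _; rewrite /dist // addr_ge0. Qed.

Lemma est_KA a b : a <> b -> estimator 2 (OM (KA a b)).
Proof.
move=> ab x y /card2P [x1 [x2 [nx ->]]] /card2P [y1 [y2 [ny ->]]] /=.
rewrite !dist2 //; split; first exact: ler0n.
by rewrite -natrD ler_nat tri2.
Qed.

Lemma est_KB a b c : a <> b -> a <> c -> estimator 2 (OM (KB a b c)).
Proof.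
move=> ab ac x y /card2P [x1 [x2 [nx ->]]] /card2P [y1 [y2 [ny ->]]] /=.
rewrite !dist2 // !minr2; split; first exact: ler0n.
rewrite -natrD ler_nat.
have := @tri2 T a b x1 x2 y1 y2 ab nx ny; have := @tri2 T a c x1 x2 y1 y2 ac nx ny; lia.
Qed.

Lemma stay_upd (w : config T -> R) r (x : config T) : estimator 2 w -> Xset 2 x ->
  0 + (1 * w x + 0) <= update 2 w r x.
Proof.
move=> ew hx; apply: update_ge => // z hz.
have [_ h] := ew z x hz hx.
have := @cost_ge_dist z x r hz hx; lra.
Qed.


Lemma fs_KA a b : a <> b -> is_fsdist 2 (PI (KA a b)).
Proof.
move=> ab; split; first by move=> x /=; exact: ler0n.
split.
  move=> x /=; have [-> _|_] := eqVneq x (fs2 a b); last by rewrite /= eqxx.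
  by rewrite /Xset /= cardfs2 (introF eqP ab).
exists [:: fs2 a b]; split => //.
  by move=> x; rewrite !inE /= => /negPf ->.
by rewrite !big_cons !big_nil /= eqxx addr0.
Qed.

Lemma fs_KB a b c : a <> b -> a <> c -> b <> c -> is_fsdist 2 (PI (KB a b c)).
Proof.
move=> ab ac bc; have ba := not_eq_sym ab; have ca := not_eq_sym ac; have cb := not_eq_sym bc.
split; first by move=> x /=; apply: addr_ge0; apply: divr_ge0 => //; exact: ler0n.
split.
  move=> x /=; have [-> _|_] := eqVneq x (fs2 a b); first by rewrite /Xset /= cardfs2 (introF eqP ab).
  have [-> _|_] := eqVneq x (fs2 a c); first by rewrite /Xset /= cardfs2 (introF eqP ac).
  by rewrite /= mul0r add0r eqxx.
exists [:: fs2 a b; fs2 a c]; split.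
- by rewrite /= !inE eq2 //; dec.
- by move=> x; rewrite !inE /= negb_or => /andP [/negPf -> /negPf ->]; rewrite /= mul0r add0r.
- rewrite !big_cons !big_nil /= !eq2 //; dec; lra.
Qed.

Lemma upd_KAr a b r x : a <> b -> r <> a -> r <> b -> Xset 2 x ->
  1 + (1 * OM (KB r a b) x + 0) <= update 2 (OM (KA a b)) r x.
Proof.
move=> ab ra rb hx; apply: update_ge => // z hz.
move: hz hx => /card2P [z1 [z2 [nz ->]]] /card2P [x1 [x2 [nx ->]]] /=.
rewrite !dist2 // cost2 // minr2.
have := @KAr_n T a b r z1 z2 x1 x2 ab ra rb nz nx.
rewrite -(ler_nat R) !natrD; lra.
Qed.

Lemma upd_KBb a b c x : a <> b -> a <> c -> b <> c -> Xset 2 x ->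
  0 + (1 * OM (KA b a) x + 0) <= update 2 (OM (KB a b c)) b x.
Proof.
move=> ab ac bc hx; apply: update_ge => // z hz.
move: hz hx => /card2P [z1 [z2 [nz ->]]] /card2P [x1 [x2 [nx ->]]] /=.
have ba := not_eq_sym ab; rewrite !dist2 // cost2 // minr2.
have := @KBb_n T a b c z1 z2 x1 x2 ab ac bc nz nx.
rewrite -(ler_nat R) !natrD; lra.
Qed.

Lemma upd_KBc a b c x : a <> b -> a <> c -> b <> c -> Xset 2 x ->
  0 + (1 * OM (KA c a) x + 0) <= update 2 (OM (KB a b c)) c x.
Proof.
move=> ab ac bc hx; apply: update_ge => // z hz.
move: hz hx => /card2P [z1 [z2 [nz ->]]] /card2P [x1 [x2 [nx ->]]] /=.
have ca := not_eq_sym ac; rewrite !dist2 // cost2 // minr2.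
have := @KBb_n T a c b z1 z2 x1 x2 ac ab (not_eq_sym bc) nz nx.
rewrite minnC -(ler_nat R) !natrD; lra.
Qed.

Lemma upd_KBd a b c d x : a <> b -> a <> c -> b <> c -> d <> a -> d <> b -> d <> c -> Xset 2 x ->
  1/3 + (1/3 * OM (KA d a) x + (1/3 * OM (KA d b) x + (1/3 * OM (KA d c) x + 0)))
    <= update 2 (OM (KB a b c)) d x.
Proof.
move=> ab ac bc da db dc hx; apply: update_ge => // z hz.
move: hz hx => /card2P [z1 [z2 [nz ->]]] /card2P [x1 [x2 [nx ->]]] /=.
rewrite !dist2 // cost2 // minr2.
have := @KBd_n T a b c d z1 z2 x1 x2 ab ac bc da db dc nz nx.
rewrite -(ler_nat R) natrM !natrD; lra.
Qed.

Lemma dcost_le (pi pi' : config T -> R) r (g : config T -> config T -> R) (s s' : seq (config T)) :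
  uniq s -> uniq s' -> (forall x, x \notin s -> pi x = 0) -> (forall y, y \notin s' -> pi' y = 0) ->
  (forall x y, 0 <= g x y) -> (forall x y, g x y != 0 -> pi x != 0 /\ pi' y != 0) ->
  (forall x, \sum_(y <- s') g x y = pi x) -> (forall y, \sum_(x <- s) g x y = pi' y) ->
  dcost pi r pi' <= \sum_(x <- s) \sum_(y <- s') g x y * cost R x r y.
Proof.
move=> us us' ns ns' g0 gnz m1 m2; apply: ge_inf.
  exists 0 => _ [g' [t [t' [_ _ [g0' _] _ ->]]]].
  apply: sumr_ge0 => x _; apply: sumr_ge0 => y _; apply: mulr_ge0 => //; exact: cost_ge0.
by exists g, s, s'; split.
Qed.

End M.

Ltac bcases := repeat lazymatch goal with |- context[nat_of_bool (?u == ?v)] => case: (u == v) end.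
Ltac nzt := rewrite /= ?nF ?nT; move=> /eqP H; split; apply/eqP => H'; clr; lra.

Section M2.
Variables (R : realType) (T : choiceType).
Notation fs2 a b := ([fset a; b]%fset : config T).
Notation PI := (@Defs.pi_of R T).
Notation OM := (@omega_of R T).

Lemma cp_KAin a b r : a <> b -> r \in fs2 a b ->
  dcost (PI (KA a b)) r (next_pi [:: (1, KA a b)]) <= 0.
Proof.
move=> ab hr.
have -> : 0 = \sum_(x <- [:: fs2 a b]) \sum_(y <- [:: fs2 a b])
   (x == fs2 a b)%:R * (y == fs2 a b)%:R * cost R x r y.
  by rewrite !big_cons !big_nil /= eqxx /cost eqxx hr /= /dist fsetDv cardfs0; fin.
apply: dcost_le => //.
- by move=> x; rewrite !inE /= => /negPf ->.
- by move=> y; rewrite !inE /next_pi !big_cons !big_nil /= => /negPf ->; fin.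
- by move=> x y; bcases; fin.
- by move=> x y; rewrite /next_pi !big_cons !big_nil /=; bcases; nzt.
- by move=> x; rewrite !big_cons !big_nil /= eqxx; fin.
- by move=> y; rewrite /next_pi !big_cons !big_nil /= eqxx; fin.
Qed.

Ltac syms := repeat match goal with
  | H : ?u <> ?v |- _ => lazymatch goal with
      | _ : v <> u |- _ => fail
      | _ => have := not_eq_sym H; move=> ? end end.

Ltac c_uniq := by rewrite /= ?inE ?negb_or ?eq2 //; dec.
Ltac c_ns := by move=> x; rewrite !inE ?negb_or /=;
   (move=> /andP [/negPf -> /negPf ->] || move=> /negPf ->); fin.
Ltac c_ns' := by move=> y; rewrite !inE ?negb_or /next_pi !big_cons !big_nil /=;
   (move=> /andP [/negPf -> /andP [/negPf -> /negPf ->]] || move=> /andP [/negPf -> /negPf ->] || move=> /negPf ->); fin.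
Ltac c_g0 := by move=> x y; bcases; fin.
Ltac c_nz := by move=> x y; rewrite /next_pi !big_cons !big_nil /=; bcases; nzt.
Ltac c_m1 := by move=> x; rewrite !big_cons !big_nil /= !eq2 //; dec; fin.
Ltac c_m2 := by move=> y; rewrite /next_pi !big_cons !big_nil /= !eq2 //; dec; fin.
Ltac c_fin := by rewrite !big_cons !big_nil /= !eq2 // !cost2 // /costn2 /distn2; dec; fin.

Lemma cp_KAout a b r : a <> b -> r <> a -> r <> b ->
  dcost (PI (KA a b)) r (next_pi [:: (1, KB r a b)]) <= 1.
Proof.
move=> *; syms.
apply: le_trans; first apply: (@dcost_le R T _ _ _
  (fun x y => (x == fs2 a b)%:R * ((y == fs2 r a)%:R / 2 + (y == fs2 r b)%:R / 2))
  [:: fs2 a b] [:: fs2 r a; fs2 r b]).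
- c_uniq.
- c_uniq.
- c_ns.
- c_ns'.
- c_g0.
- c_nz.
- c_m1.
- c_m2.
- c_fin.
Qed.

Lemma cp_KBa a b c : a <> b -> a <> c -> b <> c ->
  dcost (PI (KB a b c)) a (next_pi [:: (1, KB a b c)]) <= 0.
Proof.
move=> *; syms.
apply: le_trans; first apply: (@dcost_le R T _ _ _
  (fun x y => (x == fs2 a b)%:R * (y == fs2 a b)%:R / 2 + (x == fs2 a c)%:R * (y == fs2 a c)%:R / 2)
  [:: fs2 a b; fs2 a c] [:: fs2 a b; fs2 a c]).
- c_uniq.
- c_uniq.
- c_ns.
- c_ns'.
- c_g0.
- c_nz.
- c_m1.
- c_m2.
- c_fin.
Qed.

Lemma cp_KBb a b c : a <> b -> a <> c -> b <> c ->
  dcost (PI (KB a b c)) b (next_pi [:: (1, KA b a)]) <= 1/2.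
Proof.
move=> *; syms.
apply: le_trans; first apply: (@dcost_le R T _ _ _
  (fun x y => (x == fs2 a b)%:R * (y == fs2 b a)%:R / 2 + (x == fs2 a c)%:R * (y == fs2 b a)%:R / 2)
  [:: fs2 a b; fs2 a c] [:: fs2 b a]).
- c_uniq.
- c_uniq.
- c_ns.
- c_ns'.
- c_g0.
- c_nz.
- c_m1.
- c_m2.
- c_fin.
Qed.

Lemma cp_KBd a b c d : a <> b -> a <> c -> b <> c -> d <> a -> d <> b -> d <> c ->
  dcost (PI (KB a b c)) d (next_pi [:: (1/3, KA d a); (1/3, KA d b); (1/3, KA d c)]) <= 1.
Proof.
move=> *; syms.
apply: le_trans; first apply: (@dcost_le R T _ _ _
  (fun x y => (x == fs2 a b)%:R * ((y == fs2 d b)%:R / 3 + (y == fs2 d a)%:R / 6)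
            + (x == fs2 a c)%:R * ((y == fs2 d c)%:R / 3 + (y == fs2 d a)%:R / 6))
  [:: fs2 a b; fs2 a c] [:: fs2 d a; fs2 d b; fs2 d c]).
- c_uniq.
- c_uniq.
- c_ns.
- c_ns'.
- c_g0.
- c_nz.
- c_m1.
- c_m2.
- c_fin.
Qed.

End M2.



Ltac lst := rewrite /=; dec; repeat (apply/andP; split); (done || lra).

Theorem mainTheorem9 (R : realType) (T : choiceType)
  (T_infinite : forall s : seq T, exists p : T, p \notin s) :
  is_ks_algorithm (@K2 R T) /\ is_ks_potential (@K2 R T) (@Phi2 R T) (3/2).
Proof.
split.
- split.
  + case=> [a b | a b c] /=.
    * move=> /eqP ab; split; [exact: fs_KA | exact: est_KA].
    * case/and3P => /eqP ab /eqP ac /eqP bc; split; [exact: fs_KB | exact: est_KB].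
  + case=> [a b | a b c] r /=.
    * move=> /eqP ab; have [-> | ra] := eqVneq r a; last have [-> | rb] := eqVneq r b.
      -- rewrite /=; split; [lst | lst | by rewrite !big_cons !big_nil /= addr0 |].
         move=> x hx; rewrite /next_omega !big_cons !big_nil; exact: (@stay_upd R T _ _ _ (@est_KA R T a b ab) hx).
      -- rewrite /=; split; [lst | lst | by rewrite !big_cons !big_nil /= addr0 |].
         move=> x hx; rewrite /next_omega !big_cons !big_nil; exact: (@stay_upd R T _ _ _ (@est_KA R T a b ab) hx).
      -- move/eqP: ra => ra; move/eqP: rb => rb.
         rewrite /=; split; [lst | lst | by rewrite !big_cons !big_nil /= addr0 |].
         move=> x hx; rewrite /next_omega !big_cons !big_nil; exact: upd_KAr.
    * case/and3P => /eqP ab /eqP ac /eqP bc.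
      have [-> | ra] := eqVneq r a; last have [-> | rb] := eqVneq r b;
        last have [-> | rc] := eqVneq r c.
      -- rewrite /=; split; [lst | lst | by rewrite !big_cons !big_nil /= addr0 |].
         move=> x hx; rewrite /next_omega !big_cons !big_nil; exact: (@stay_upd R T _ _ _ (@est_KB R T a b c ab ac) hx).
      -- rewrite /=; dec; split; [lst | lst | by rewrite !big_cons !big_nil /= addr0 |].
         move=> x hx; rewrite /next_omega !big_cons !big_nil; exact: upd_KBb.
      -- rewrite /=; dec; split; [lst | lst | by rewrite !big_cons !big_nil /= addr0 |].
         move=> x hx; rewrite /next_omega !big_cons !big_nil; exact: upd_KBc.
      -- move/eqP: ra => ra; move/eqP: rb => rb; move/eqP: rc => rc.
         rewrite /=; split; [lst | lst | by rewrite !big_cons !big_nil /=; lra |].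
         move=> x hx; rewrite /next_omega !big_cons !big_nil; exact: upd_KBd.
- split.
  + by case=> [a b | a b c] _ /=; lra.
  + case=> [a b | a b c] r /=.
    * move=> /eqP ab; have [-> | ra] := eqVneq r a; last have [-> | rb] := eqVneq r b.
      -- move: (@cp_KAin R T a b a ab (fset21 _ _)).
         rewrite /step_cost /= ?eqxx ?orbT /=; dec; rewrite !big_cons !big_nil /=; clr; lra.
      -- move: (@cp_KAin R T a b b ab (fset22 _ _)).
         rewrite /step_cost /= ?eqxx ?orbT /=; dec; rewrite !big_cons !big_nil /=; clr; lra.
      -- move/eqP: ra => ra; move/eqP: rb => rb.
         move: (@cp_KAout R T a b r ab ra rb).
         rewrite /step_cost /= ?eqxx ?orbT /=; dec; rewrite !big_cons !big_nil /=; clr; lra.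
    * case/and3P => /eqP ab /eqP ac /eqP bc.
      have [-> | ra] := eqVneq r a; last have [-> | rb] := eqVneq r b;
        last have [-> | rc] := eqVneq r c.
      -- move: (@cp_KBa R T a b c ab ac bc).
         rewrite /step_cost /= ?eqxx ?orbT /=; dec; rewrite !big_cons !big_nil /=; clr; lra.
      -- move: (@cp_KBb R T a b c ab ac bc).
         rewrite /step_cost /= ?eqxx ?orbT /=; dec; rewrite !big_cons !big_nil /=; clr; lra.
      -- have E : Defs.pi_of R (KB a b c) = Defs.pi_of R (KB a c b).
           by apply: funext => x /=; rewrite addrC.
         move: (@cp_KBb R T a c b ac ab (not_eq_sym bc)).
         rewrite /step_cost -E /= ?eqxx ?orbT /=; dec; rewrite !big_cons !big_nil /=; clr; lra.
      -- move/eqP: ra => ra; move/eqP: rb => rb; move/eqP: rc => rc.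
         move: (@cp_KBd R T a b c r ab ac bc ra rb rc).
         rewrite /step_cost /= ?eqxx ?orbT /=; dec; rewrite !big_cons !big_nil /=; clr; lra.
Qed.
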